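(* Let $D\subset\mathbb R^d$ be a domain, $\mathcal M$ a countable index set with a level function $|\cdot|\colon\mathcal M\to\mathbb N_0$, and $\theta_\mu\in L_\infty(D)$, $\mu\in\mathcal M$, such that for all $\mu\in\mathcal M$: (a) $\operatorname{diam}\operatorname{supp}\theta_\mu\eqsim 2^{-|\mu|}$; (b) $\#\{\mu\in\mathcal M:|\mu|=\ell,\ \operatorname{supp}\theta_\mu\cap B(x,r)\neq\emptyset\}\lesssim\max\{1,2^{d\ell}r^d\}$ for all $x\in\mathbb R^d$, $r>0$, $\ell\in\mathbb N_0$; (c) for some $\alpha>0$, $\|\theta_\mu\|_{L_\infty(D)}\lesssim 2^{-\alpha|\mu|}$. Then there exist $Q\in\mathbb N$, depending on $d$ and the implicit constants in (a)–(c), and a level assignment $|\cdot|_Q\colon\mathcal M\to\mathbb N_0$ such that: (i) if $|\mu|_Q=|\mu'|_Q$ and $\mu\neq\mu'$, then $\theta_\mu\theta_{\mu'}=0$ in $L_\infty(D)$; (ii) for every $\mu$ and all $\ell<|\mu|_Q$ there is at most one $\mu'$ with $|\mu'|_Q=\ell$ and $\theta_\mu\theta_{\mu'}\neq0$ in $L_\infty(D)$; (iii) $\#\{\mu:|\mu|_Q=\ell\}\lesssim 2^{\frac dQ\ell}$ for all $\ell$; (iv) $\sum_{|\mu|_Q=\ell}|\theta_\mu|\lesssim 2^{-\frac\alpha Q\ell}$ a.e. in $D$ for all $\ell$, with constants independent of $\ell$.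
   Context: $B(x,r)$ denotes the ball of radius $r$ centered at $x$; $\lesssim$ and $\eqsim$ denote inequalities/equivalences up to constants independent of $\mu,\ell,x,r$. *)

(* Defs.v *)
From HB Require Import structures.
From mathcomp Require Import all_boot all_order all_algebra.
From mathcomp Require Import all_classical all_reals all_analysis.
Set Implicit Arguments. Unset Strict Implicit. Unset Printing Implicit Defensive.
Import Order.TTheory GRing.Theory Num.Theory.
Import numFieldNormedType.Exports.
Local Open Scope classical_set_scope.
Local Open Scope ring_scope.

Section Defs.
Variables (R : realType) (d : nat).
Notation V := 'rV[R]_d.

Definition eucl (x : V) : R := Num.sqrt (\sum_(i < d) (x ord0 i) ^+ 2).

Definition eball (x : V) (r : R) : set V := [set y | eucl (y - x) < r].

(* diameter (in the extended reals; -oo for the empty set, +oo if unbounded) *)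
Definition diam (A : set V) : \bar R :=
  ereal_sup [set (eucl (x - y))%:E | x in A & y in A].

Definition box (a b : V) : set V :=
  [set x | forall i : 'I_d, a ord0 i <= x ord0 i <= b ord0 i].
Definition vol (a b : V) : R := \prod_(i < d) Num.max 0 (b ord0 i - a ord0 i).

Definition lebesgue_outer (A : set V) : \bar R :=
  ereal_inf [set s : \bar R | exists a b : nat -> V,
     A `<=` \bigcup_k box (a k) (b k) /\
     s = (\sum_(0 <= k <oo) (vol (a k) (b k))%:E)%E].

Definition leb_measurable (A : set V) : Prop :=
  forall E : set V, lebesgue_outer E = (lebesgue_outer (E `&` A) + lebesgue_outer (E `\` A))%E.

Definition leb_null (N : set V) : Prop := lebesgue_outer N = 0%E.

Definition ae_in (D : set V) (P : V -> Prop) : Prop :=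
  leb_null [set x | D x /\ ~ P x].

Definition leb_measurable_fun (D : set V) (f : V -> R) : Prop :=
  forall a : R, leb_measurable [set x | D x /\ f x < a].

Definition in_Linfty (D : set V) (f : V -> R) : Prop :=
  leb_measurable_fun D f /\ exists C : R, ae_in D (fun x => `|f x| <= C).

(* support of (the given representative of) f on D: closure of {x in D | f x <> 0} *)
Definition supp (D : set V) (f : V -> R) : set V :=
  closure [set x | D x /\ f x != 0].

Definition domain (D : set V) : Prop := D !=set0 /\ open D /\ connected D.

Definition bounded_dom (D : set V) : Prop := exists M : R, forall x, D x -> eucl x <= M.
End Defs.

Definition at_most {R : realType} {M : eqType} (A : set M) (c : R) : Prop :=
  exists s : seq M, (size s)%:R <= c /\ A `<=` [set x | x \in s].

(* Main.v *)
Require Import Defs.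
From HB Require Import structures.
From mathcomp Require Import all_boot all_order all_algebra.
From mathcomp Require Import all_classical all_reals all_analysis.
From mathcomp Require Import lra zify.
Import Order.TTheory GRing.Theory Num.Theory.
Import numFieldNormedType.Exports.
Local Open Scope classical_set_scope.
Local Open Scope ring_scope.

Set Implicit Arguments. Unset Strict Implicit.
Section Null.
Variables (R : realType) (d : nat).
Notation V := 'rV[R]_d.

Lemma vol_ge0 (a b : V) : 0 <= vol a b.
Proof. by apply: prodr_ge0 => i _; rewrite le_max lexx. Qed.

Lemma series_le_ub (u : nat -> \bar R) (x : \bar R) :
  (forall n, (0 <= u n)%E) -> (forall n, (\sum_(0 <= i < n) u i <= x)%E) ->
  (\sum_(0 <= i <oo) u i <= x)%E.
Proof.
move=> u0 ub.
rewrite (cvg_lim _ (ereal_nondecreasing_cvgn (ereal_nondecreasing_series (fun n _ _ => u0 n)))) //.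
by apply: ge_ereal_sup => _ [n _ <-]; exact: ub.
Qed.

Lemma outer_ge0 (A : set V) : (0 <= lebesgue_outer A)%E.
Proof.
apply: le_ereal_inf_tmp => _ [a [b [_ ->]]].
by apply: nneseries_ge0 => n _ _; rewrite lee_fin vol_ge0.
Qed.

Lemma outer_le (A B : set V) : A `<=` B -> (lebesgue_outer A <= lebesgue_outer B)%E.
Proof.
move=> AB; apply: ereal_inf_le_tmp => _ [a [b [cov ->]]].
exists a, b; split => //; exact: subset_trans cov.
Qed.

Lemma null_sub (A B : set V) : A `<=` B -> leb_null B -> leb_null A.
Proof.
move=> AB nB; apply/le_anti; rewrite outer_ge0 andbT -nB; exact: outer_le.
Qed.

Lemma null_empty (A : set V) : (0 < d)%N -> (forall x, ~ A x) -> leb_null A.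
Proof.
move=> d0 nA; apply/le_anti; rewrite outer_ge0 andbT.
apply: ereal_inf_lbound; exists (fun=> 0), (fun=> 0); split => //.
  by move=> x /nA.
rewrite eseries0 // => i _ _.
rewrite /vol; apply/eqP; rewrite eqe; apply/eqP.
by rewrite (bigD1 (Ordinal d0)) //= !mxE subrr maxxx mul0r.
Qed.

Lemma interleave_sum (f g : nat -> \bar R) n :
  (\sum_(0 <= i < n.*2) (if odd i then g i./2 else f i./2) =
   \sum_(0 <= i < n) f i + \sum_(0 <= i < n) g i)%E.
Proof.
elim: n => [|n IH]; first by rewrite !big_mkord !big_ord0 adde0.
rewrite doubleS !big_nat_recr //= IH.
rewrite odd_double /= uphalf_double doubleK -!addeA; congr (_ + _)%E.
by rewrite addeCA.
Qed.

Lemma null_union (A B : set V) : leb_null A -> leb_null B -> leb_null (A `|` B).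
Proof.
move=> nA nB; apply/le_anti; rewrite outer_ge0 andbT.
apply/lee_addgt0Pr => e e0; rewrite add0e.
have e20 : 0 < e / 2 by rewrite divr_gt0.
have hA : (lebesgue_outer A < (e/2)%:E)%E by rewrite nA lte_fin.
have hB : (lebesgue_outer B < (e/2)%:E)%E by rewrite nB lte_fin.
case: (ereal_inf_lt hA) => _ [aA [bA [covA ->]]] ltA.
case: (ereal_inf_lt hB) => _ [aB [bB [covB ->]]] ltB.
pose a k := if odd k then aB k./2 else aA k./2.
pose b k := if odd k then bB k./2 else bA k./2.
apply: ge_ereal_inf; exists (\sum_(0 <= k <oo) (vol (a k) (b k))%:E)%E.
  exists a, b; split => //.
  move=> x [/covA [k _ hk]|/covB [k _ hk]].
    exists k.*2 => //; by rewrite /a /b odd_double doubleK.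
  exists k.*2.+1 => //; by rewrite /a /b /= odd_double /= uphalf_double.
apply: series_le_ub => [n|n]; first by rewrite lee_fin vol_ge0.
apply: (@le_trans _ _ (\sum_(0 <= i < n.*2) (vol (a i) (b i))%:E)%E).
  apply: (ereal_nondecreasing_series (P := xpredT) (N := 0%N) (u_ := fun i => (vol (a i) (b i))%:E)); first by move=> *; rewrite lee_fin vol_ge0.
  by rewrite -addnn leq_addr.
rewrite (eq_bigr (fun i => if odd i then (vol (aB i./2) (bB i./2))%:E else (vol (aA i./2) (bA i./2))%:E)%E); last first.
  by move=> i _; rewrite /a /b; case: odd.
have := interleave_sum (fun j => (vol (aA j) (bA j))%:E)%E (fun j => (vol (aB j) (bB j))%:E)%E n; rewrite /= => ->.
rewrite (splitr e) EFinD.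
apply: leeD; apply: ltW.
  apply: le_lt_trans ltA; apply: nneseries_lim_ge => k _ _; by rewrite lee_fin vol_ge0.
apply: le_lt_trans ltB; apply: nneseries_lim_ge => k _ _; by rewrite lee_fin vol_ge0.
Qed.

Lemma null_bigcup (T : eqType) (s : seq T) (N : T -> set V) : (0 < d)%N ->
  (forall t, t \in s -> leb_null (N t)) ->
  leb_null [set x | exists2 t, t \in s & N t x].
Proof.
move=> d0; elim: s => [|t s IH] hN.
  by apply: null_empty => // x [].
apply: (@null_sub _ (N t `|` [set x | exists2 t, t \in s & N t x])).
  move=> x [u]; rewrite in_cons => /orP[/eqP -> |us] Nx; [by left|right; by exists u].
apply: null_union; first by apply: hN; rewrite mem_head.
by apply: IH => u us; apply: hN; rewrite in_cons us orbT.
Qed.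
End Null.
Section Geo.
Variables (R : realType) (d : nat).
Notation V := 'rV[R]_d.

Lemma eucl_ge0 (v : V) : 0 <= eucl v.
Proof. exact: sqrtr_ge0. Qed.

Lemma eucl0 : eucl (0 : V) = 0.
Proof. by rewrite /eucl big1 ?sqrtr0 // => i _; rewrite mxE expr0n. Qed.

Lemma euclN (v : V) : eucl (- v) = eucl v.
Proof. by rewrite /eucl; congr Num.sqrt; apply: eq_bigr => i _; rewrite mxE sqrrN. Qed.

Lemma euclB (x y : V) : eucl (x - y) = eucl (y - x).
Proof. by rewrite -euclN opprB. Qed.

Lemma coord_le (v : V) i : `|v ord0 i| <= eucl v.
Proof.
rewrite -sqrtr_sqr /eucl ler_sqrt; last by apply: sumr_ge0 => j _; exact: sqr_ge0.
rewrite (bigD1 i) //= lerDl; apply: sumr_ge0 => j _; exact: sqr_ge0.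
Qed.

Lemma eucl_le (v : V) (c : R) : 0 <= c -> (forall i, `|v ord0 i| <= c) -> eucl v <= c * d%:R.
Proof.
move=> c0 hv; rewrite -(ger0_norm (mulr_ge0 c0 (ler0n _ d))) -sqrtr_sqr /eucl ler_sqrt; last exact: sqr_ge0.
apply: (@le_trans _ _ (\sum_(i < d) c ^+ 2)).
  apply: ler_sum => i _; rewrite -real_normK ?num_real //. 
  by rewrite lerXn2r ?nnegrE ?normr_ge0 // hv.
rewrite sumr_const card_ord exprMn.
have h : c ^+ 2 *+ d <= c ^+ 2 * (d%:R) ^+ 2 :> R.
  rewrite -mulr_natr; apply: ler_wpM2l; first exact: sqr_ge0.
  rewrite -natrX ler_nat; case: (d) => // n; rewrite expnS leq_pmulr //.
exact: h.
Qed.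
End Geo.
Section Greedy.
Local Open Scope nat_scope.
Variables (adjN : nat -> nat -> Prop) (Q : nat).
Definition okc n s c := `[< forall m, (m < n)%N -> adjN m n -> nth 0%N s m != c >].
Definition newc n s := find (okc n s) (iota 0 Q).
Fixpoint colseq n := if n is n'.+1 then rcons (colseq n') (newc n' (colseq n')) else [::].
Definition gcol n := newc n (colseq n).

Lemma size_colseq n : size (colseq n) = n.
Proof. by elim: n => //= n IH; rewrite size_rcons IH. Qed.

Lemma nth_colseq n m : (m < n)%N -> nth 0%N (colseq n) m = gcol m.
Proof.
elim: n => // n IH; rewrite ltnS leq_eqVlt => /orP[/eqP ->|mn] /=.
  by rewrite nth_rcons size_colseq ltnn eqxx.
by rewrite nth_rcons size_colseq mn IH.
Qed.

Lemma col_spec n : (exists c, (c < Q)%N /\ okc n (colseq n) c) ->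
  (gcol n < Q)%N /\ forall m, (m < n)%N -> adjN m n -> gcol m != gcol n.
Proof.
move=> [c [cQ okc_c]].
have hh : has (okc n (colseq n)) (iota 0 Q).
  by apply/hasP; exists c => //; rewrite mem_iota.
have := has_find (okc n (colseq n)) (iota 0 Q); rewrite hh size_iota => fQ.
have := nth_find 0%N hh; rewrite nth_iota // add0n => /asboolP okf.
split=> [|m mn am]; first by rewrite -fQ. rewrite -(@nth_colseq n m mn); exact: okf.
Qed.

Lemma free_color n (U : seq nat) : (size U < Q)%N ->
  (forall m, (m < n)%N -> adjN m n -> nth 0%N (colseq n) m \in U) ->
  exists c, (c < Q)%N /\ okc n (colseq n) c.
Proof.
move=> sU hU.
have : has (fun c => c \notin U) (iota 0 Q).
  apply/negPn/negP; rewrite -all_predC => /allP hall.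
  have sub : {subset iota 0 Q <= U}.
    by move=> c /hall /=; rewrite negbK.
  have := uniq_leq_size (iota_uniq 0 Q) sub; rewrite size_iota.
  by rewrite leqNgt sU.
case/hasP => c; rewrite mem_iota add0n => /andP[_ cQ] cU.
exists c; split => //; apply/asboolP => m mn am.
by apply: contraNneq cU => <-; apply: hU.
Qed.
End Greedy.

Lemma lev_le_aux (Q a c k c1 : nat) : (c < Q)%N -> (Q * k + c1 < Q * a + c)%N -> (k <= a)%N.
Proof.
move=> cQ lt; rewrite leqNgt; apply/negP => h.
have : (Q * a.+1 <= Q * k)%N by rewrite leq_mul2l h orbT.
move: lt cQ; rewrite mulnS; lia.
Qed.

Lemma divM_aux (l Q : nat) : (Q * (l %/ Q) <= l)%N.
Proof. by rewrite mulnC leq_divM. Qed.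

Unset Implicit Arguments. Set Strict Implicit.


Theorem lemma3p4 (R : realType) (d : nat) (d_gt0 : (0 < d)%N)
  (ca1 ca2 cb cc alpha : R)
  (ca1_gt0 : 0 < ca1) (ca2_gt0 : 0 < ca2) (cb_gt0 : 0 < cb) (cc_gt0 : 0 < cc)
  (alpha_gt0 : 0 < alpha) :
  exists Q : nat, (0 < Q)%N /\
  forall (D : set 'rV[R]_d) (M : countType) (lev : M -> nat)
         (theta : M -> 'rV[R]_d -> R),
    domain D -> bounded_dom D ->
    (forall mu, in_Linfty D (theta mu)) ->
    (* (a) *)
    (forall mu, (ca1 * 2 `^ (- (lev mu)%:R))%:E <= diam (supp D (theta mu)) /\
                diam (supp D (theta mu)) <= (ca2 * 2 `^ (- (lev mu)%:R))%:E)%E ->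
    (* (b) *)
    (forall (x : 'rV[R]_d) (r : R) (l : nat), 0 < r ->
       at_most [set mu | lev mu = l /\ supp D (theta mu) `&` eball x r !=set0]
               (cb * Num.max 1 (2 `^ (d%:R * l%:R) * r ^+ d))) ->
    (* (c) *)
    (forall mu, ae_in D (fun x => `|theta mu x| <= cc * 2 `^ (- alpha * (lev mu)%:R))) ->
    exists (levQ : M -> nat) (C3 C4 : R),
      (* (i) *)
      (forall mu mu', levQ mu = levQ mu' -> mu <> mu' ->
         ae_in D (fun x => theta mu x * theta mu' x = 0)) /\
      (* (ii) *)
      (forall mu (l : nat), (l < levQ mu)%N ->
         forall mu1 mu2, levQ mu1 = l -> levQ mu2 = l ->
           ~ ae_in D (fun x => theta mu x * theta mu1 x = 0) ->
           ~ ae_in D (fun x => theta mu x * theta mu2 x = 0) ->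
           mu1 = mu2) /\
      (* (iii) *)
      (forall l : nat,
         at_most [set mu | levQ mu = l] (C3 * 2 `^ (d%:R / Q%:R * l%:R))) /\
      (* (iv) *)
      (forall l : nat,
         ae_in D (fun x => (\esum_(mu in [set mu | levQ mu = l]) (`|theta mu x|)%:E
                             <= (C4 * 2 `^ (- (alpha / Q%:R) * l%:R))%:E)%E)).
Proof.
pose K := cb * Num.max 1 ((3 * d%:R * ca2) ^+ d).
pose Q := (Num.truncn K).+1.
have KQ : K < Q%:R by exact: truncnS_gt.
have Q0 : (0 < Q)%N by [].
exists Q; split => //.
move=> D M lev theta _ [Mb hMb] _ hA hB hC.
have p2gt0 : forall y : R, 0 < 2 `^ y by move=> y; apply: powR_gt0.
have two1 : (1 : R) <= 2 by rewrite ler1n.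
have supp_ne : forall mu, exists x, D x /\ theta mu x != 0.
  move=> mu; apply: contrapT => hne.
  have e0 : [set x | D x /\ theta mu x != 0] = set0.
    by apply/seteqP; split => x //= hx; apply: hne; exists x.
  have := (hA mu).1; rewrite /diam /supp e0 closure0.
  set S := (X in ereal_sup X).
  have -> : S = set0 by apply/seteqP; split => // z [x].
  by rewrite ereal_sup0 leeNy_eq.
have in_supp : forall mu x, D x -> theta mu x != 0 -> supp D (theta mu) x.
  by move=> mu x Dx tx; apply: subset_closure.
have diam_ub : forall mu x y, supp D (theta mu) x -> supp D (theta mu) y ->
    eucl (x - y) <= ca2 * 2 `^ (- (lev mu)%:R).
  move=> mu x y hx hy; rewrite -lee_fin; apply: le_trans (hA mu).2.
  by apply: ereal_sup_ubound; exists x => //; exists y.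
pose adj mu' mu := lev mu' = lev mu /\ exists x y, supp D (theta mu') x /\
   supp D (theta mu) y /\ eucl (x - y) <= ca2 * 2 `^ (- (lev mu)%:R).
pose adjN m n := exists mu' mu, pickle mu' = m /\ pickle mu = n /\ adj mu' mu.
pose cl := gcol adjN Q.
have pinj : injective (@pickle M) := pcan_inj pickleK.
have d0 : 0 < d%:R :> R by rewrite ltr0n.
have colP : forall mu : M, (cl (pickle mu) < Q)%N /\ forall m, (m < pickle mu)%N ->
    adjN m (pickle mu) -> cl m != cl (pickle mu).
  move=> mu; rewrite /cl; apply: col_spec.
  have [x0 [Dx0 tx0]] := supp_ne mu.
  have sx0 := in_supp mu x0 Dx0 tx0.
  set k := lev mu; set cst := ca2 * 2 `^ (- k%:R).
  have cst0 : 0 < cst by rewrite mulr_gt0.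
  have r0 : 0 < 3 * d%:R * cst by rewrite !mulr_gt0.
  have [s [ss hs]] := hB x0 _ k r0.
  apply: (@free_color adjN Q (pickle mu) (map (fun mu' => nth 0%N (colseq adjN Q (pickle mu)) (pickle mu')) s)).
    rewrite size_map -(ltr_nat R); apply: le_lt_trans KQ; apply: (le_trans ss).
    suff -> : 2 `^ (d%:R * k%:R) * (3 * d%:R * cst) ^+ d = (3 * d%:R * ca2) ^+ d by [].
    rewrite /cst mulrA exprMn mulrA [_ * (3 * _ * _) ^+ d]mulrC -mulrA.
    rewrite -(powR_mulrn _ (powR_ge0 _ _)) -powRrM -mulrA -powRD; last first.
      by apply/implyP => _; rewrite pnatr_eq0.
    by rewrite mulNr [k%:R * _]mulrC addrN powRr0 mulr1.
  move=> m mn [mu' [mu'' [pm [pmu [hlev [x [y [sx [sy dxy]]]]]]]]].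
  have emu : mu'' = mu by apply: pinj.
  subst mu'' m.
  apply: map_f; apply: hs; split => //; exists x; split => //.
  have hy := diam_ub mu y x0 sy sx0.
  rewrite /eball /=.
  have c20 : 0 <= 2 * cst by rewrite mulr_ge0 // ltW.
  apply: (le_lt_trans (eucl_le c20 _)).
    move=> i; have -> : (x - x0) ord0 i = (x - y) ord0 i + (y - x0) ord0 i.
      by rewrite !mxE addrA subrK.
    apply: le_trans (ler_normD _ _) _; rewrite mulr2n mulrDl mul1r.
    by apply: lerD; apply: le_trans (coord_le _ _) _.
  nra.
have sep : forall mu1 mu2 : M, mu1 <> mu2 -> lev mu1 = lev mu2 ->
    cl (pickle mu1) = cl (pickle mu2) -> forall x y, supp D (theta mu1) x ->
    supp D (theta mu2) y -> ca2 * 2 `^ (- (lev mu1)%:R) < eucl (x - y).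
  move=> mu1 mu2 ne el ec x y sx sy; rewrite ltNge; apply/negP => hxy.
  have np : pickle mu1 != pickle mu2 by apply/eqP => /pinj.
  case: (ltngtP (pickle mu1) (pickle mu2)) => [lt|gt|eq]; last by rewrite eq eqxx in np.
    have h : adjN (pickle mu1) (pickle mu2).
      by exists mu1, mu2; do 2 split => //; split => //; exists x, y; rewrite -el.
    by move: ((colP mu2).2 _ lt h); rewrite ec eqxx.
  have h : adjN (pickle mu2) (pickle mu1).
    by exists mu2, mu1; do 2 split => //; split => //; exists y, x; rewrite euclB.
  by move: ((colP mu1).2 _ gt h); rewrite ec eqxx.
have nat_uniq : forall a b a' b' : nat, (b < Q)%N -> (b' < Q)%N ->
    (Q * a + b = Q * a' + b')%N -> a = a' /\ b = b'.
  move=> a b a' b' bQ b'Q e.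
  have ea : a = a'.
    have := congr1 (fun t => t %/ Q)%N e; rewrite /= !(mulnC Q) !divnMDl //.
    by rewrite !divn_small // !addn0.
  by split => //; move: e; rewrite ea => /addnI.
pose levQ (mu : M) := (Q * lev mu + cl (pickle mu))%N.
have levQ_inj : forall mu mu' : M, levQ mu = levQ mu' ->
    lev mu = lev mu' /\ cl (pickle mu) = cl (pickle mu').
  move=> mu mu' e; apply: nat_uniq e; exact: (colP _).1.
have levQ_div : forall (mu : M) l, levQ mu = l -> lev mu = (l %/ Q)%N.
  move=> mu l <-; rewrite /levQ mulnC divnMDl // divn_small ?addn0 //; exact: (colP _).1.
have nae : forall P : 'rV[R]_d -> Prop, ~ ae_in D P -> exists x, D x /\ ~ P x.
  move=> P hn; apply: contrapT => hne; apply: hn; apply: null_empty => // x [Dx Px].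
  by apply: hne; exists x.
have cpos : forall k : nat, 0 < ca2 * 2 `^ (- k%:R) by move=> k; rewrite mulr_gt0.
pose rho := `|Mb| + 1.
have rho0 : 0 < rho by rewrite /rho ltr_pwDr // normr_ge0.
exists levQ, (cb * Num.max 1 (rho ^+ d)), (cc * 2 `^ alpha).
split.
  move=> mu mu' e ne; have [el ec] := levQ_inj _ _ e.
  apply: null_empty => // x [Dx hx].
  have t1 : theta mu x != 0 by apply/eqP => h; apply: hx; rewrite h mul0r.
  have t2 : theta mu' x != 0 by apply/eqP => h; apply: hx; rewrite h mulr0.
  have := sep _ _ ne el ec x x (in_supp _ _ Dx t1) (in_supp _ _ Dx t2).
  by rewrite subrr eucl0 ltNge ltW.
split.
  move=> mu l lt mu1 mu2 e1 e2 n1 n2; apply: contrapT => ne.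
  have [x [Dx hx]] := nae _ n1; have [y [Dy hy]] := nae _ n2.
  have tx : theta mu x != 0 by apply/eqP => h; apply: hx; rewrite h mul0r.
  have tx1 : theta mu1 x != 0 by apply/eqP => h; apply: hx; rewrite h mulr0.
  have ty : theta mu y != 0 by apply/eqP => h; apply: hy; rewrite h mul0r.
  have ty2 : theta mu2 y != 0 by apply/eqP => h; apply: hy; rewrite h mulr0.
  have [el ec] := levQ_inj mu1 mu2 (etrans e1 (esym e2)).
  have klev : (lev mu1 <= lev mu)%N.
    apply: (lev_le_aux (colP mu).1); move: lt; rewrite -e1; exact.
  have := sep mu1 mu2 ne el ec x y (in_supp _ _ Dx tx1) (in_supp _ _ Dy ty2).
  have := diam_ub mu x y (in_supp _ _ Dx tx) (in_supp _ _ Dy ty).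
  move=> h1 h2; have := lt_le_trans h2 h1; apply/negP; rewrite -leNgt.
  apply: ler_wpM2l; first exact: ltW.
  by apply: ler_powR => //; rewrite lerN2 ler_nat.
have memb : forall (k : nat) (s : seq M),
    [set mu | lev mu = k /\ supp D (theta mu) `&` eball 0 rho !=set0] `<=` [set x | x \in s] ->
    forall mu, lev mu = k -> mu \in s.
  move=> k s hs mu lk; apply: hs; split => //.
  have [x [Dx tx]] := supp_ne mu; exists x; split; first exact: in_supp.
  rewrite /eball /= subr0; apply: le_lt_trans (hMb _ Dx) _.
  by rewrite /rho; apply: le_lt_trans (ler_norm Mb) _; rewrite ltrDl ltr01.
split.
  move=> l; set k := (l %/ Q)%N.
  have [s [ss hs]] := hB 0 rho k rho0.
  exists s; split; last by move=> mu /= e; apply: (memb k s hs); exact: levQ_div.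
  apply: (le_trans ss).
  rewrite -mulrA; apply: ler_wpM2l; first exact: ltW.
  set t := 2 `^ (d%:R * k%:R).
  have t1 : 1 <= t.
    rewrite -(powRr0 2) /t; apply: ler_powR => //; by rewrite mulr_ge0.
  have tle : t <= 2 `^ (d%:R / Q%:R * l%:R).
    apply: ler_powR => //.
    rewrite mulrAC ler_pdivlMr ?ltr0n // -mulrA ler_wpM2l // -natrM ler_nat.
    exact: leq_divM.

  have m1 : 1 <= Num.max 1 (rho ^+ d) by rewrite le_max lexx.
  apply: (@le_trans _ _ (t * Num.max 1 (rho ^+ d))).
    rewrite ge_max; apply/andP; split.
      by apply: (le_trans t1); rewrite ler_peMr // (le_trans ler01 t1).
    by apply: ler_wpM2l; [exact: le_trans ler01 t1|rewrite le_max lexx orbT].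
  by rewrite mulrC; apply: ler_wpM2l => //; exact: le_trans ler01 m1.
move=> l; set k := (l %/ Q)%N.
have [s [ss hs]] := hB 0 rho k rho0.
pose N (mu : M) := [set x | D x /\ ~ (`|theta mu x| <= cc * 2 `^ (- alpha * (lev mu)%:R))].
apply: (null_sub _ (@null_bigcup R d M s N d_gt0 (fun mu _ => hC mu))).
move=> x [Dx hx]; apply: contrapT => hnot; apply: hx.
have bnd : forall mu, levQ mu = l -> `|theta mu x| <= cc * 2 `^ (- alpha * k%:R).
  move=> mu e; have lk := levQ_div _ _ e.
  have mus : mu \in s by apply: (memb k s hs).
  apply: contrapT => hb; apply: hnot; exists mu => //; split => //; rewrite lk; exact: hb.
have bound : cc * 2 `^ (- alpha * k%:R) <= cc * 2 `^ alpha * 2 `^ (- (alpha / Q%:R) * l%:R).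
  rewrite -mulrA; apply: ler_wpM2l; first exact: ltW.
  rewrite -powRD; last by apply/implyP => _; rewrite pnatr_eq0.
  apply: ler_powR => //.
  have hl : l%:R / Q%:R <= k%:R + 1 :> R.
    by rewrite ler_pdivrMr ?ltr0n // natr1 -natrM ler_nat ltnW // ltn_ceil.
  rewrite !mulNr; have -> : alpha / Q%:R * l%:R = alpha * (l%:R / Q%:R) by rewrite [RHS]mulrA mulrAC.
  move: hl; set y := l%:R / Q%:R; move=> hl; nra.
have Bpos : 0 <= cc * 2 `^ alpha * 2 `^ (- (alpha / Q%:R) * l%:R).
  by rewrite !mulr_ge0 ?powR_ge0 // ltW.
case: (pselect (exists mu, levQ mu = l /\ theta mu x != 0)) => [[mu0 [e0 t0]]|hn].
  rewrite (@esumID R M [set mu0]); last by move=> i _; rewrite lee_fin normr_ge0.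
  rewrite [X in (_ + X)%E]esum1 ?adde0; last first.
    move=> i [/= ei ni]; apply/eqP; rewrite eqe normr_eq0; apply/negPn/negP => ti.
    have ne : i <> mu0 by move=> h; apply: ni; rewrite h.
    have [el ec] := levQ_inj _ _ (etrans ei (esym e0)).
    have := sep _ _ ne el ec x x (in_supp _ _ Dx ti) (in_supp _ _ Dx t0).
    by rewrite subrr eucl0 ltNge ltW.
  have -> : [set mu | levQ mu = l] `&` [set mu0] = [set mu0].
    by apply/seteqP; split => [i [_ ->]|i ->] //.
  rewrite esum_set1 ?lee_fin ?normr_ge0 //; exact: le_trans (bnd mu0 e0) bound.
rewrite esum1 // => i ei; apply/eqP; rewrite eqe normr_eq0; apply/negPn/negP => ti.
by apply: hn; exists i.
Qed.
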